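(* Let $e\in\mathbb{Z}/2$, $n\in2\mathbb{N}$, and let $\Delta\in\mathfrak{A}^n$ satisfy $n^\Delta_{-\lambda}=n^\Delta_\lambda$ and $n^\Delta_{\lambda^q}=n^\Delta_\lambda$ for all $\lambda\in k^*$. Then ${}^ej_\Delta=n(q-(-1)^e)/4\in\mathbb{Z}/2$.
   Context: $k$ is an algebraic closure of $\mathbb{F}_q$, $q$ odd; $k^\triangle=k\setminus\{0,1,-1\}$. Permutations of $k^\triangle$: $\alpha(\lambda)=\lambda^{-1}$, $\beta(\lambda)=-\lambda$, $\gamma(\lambda)=\lambda^q$, $\gamma_e=\beta^e\gamma$. $\Omega_{\alpha,\gamma_e}$ is the set of orbits on $k^\triangle$ of the group generated by $\alpha,\gamma_e$, and $\Omega'_{\alpha,\gamma_e}$ the set of those orbits that are a single $\gamma_e$-orbit. For monic $\Delta\in k[X]$ with $\Delta(0)\ne0$ write $\Delta=\prod_{\lambda\in k^*}(X-\lambda)^{n^\Delta_\lambda}$. $\mathfrak{A}^n$ is the set of such $\Delta$ of degree $n$ with $n^\Delta_{\lambda^{-1}}=n^\Delta_\lambda$ for all $\lambda$ and $n^\Delta_1,n^\Delta_{-1}$ even. When $\lambda\mapsto n^\Delta_\lambda$ is constant on each $\mathcal{O}\in\Omega_{\alpha,\gamma_e}$ (with value $n^\Delta_{\mathcal{O}}$), set ${}^ej_\Delta=\sum_{\mathcal{O}\in\Omega'_{\alpha,\gamma_e}}n^\Delta_{\mathcal{O}}\in\mathbb{Z}/2$. *)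

(* Defs.v *)
From Stdlib Require Import Relations.
From HB Require Import structures.
From mathcomp Require Import all_boot all_order all_algebra.
Set Implicit Arguments. Unset Strict Implicit. Unset Printing Implicit Defensive.
Import GRing.Theory.
Local Open Scope ring_scope.

Section Defs.
Variable k : closedFieldType.

Definition ktri (x : k) : Prop := [/\ x != 0, x != 1 & x != -1].

(* gamma_e (lambda) = beta^e (gamma lambda) = (-1)^e * lambda^q ; e : bool = Z/2 *)
Definition gam (q : nat) (e : bool) (x : k) : k := (-1) ^+ e * x ^+ q.

(* orbit relation of the group generated by alpha (inversion) and gamma_e:
   the equivalence relation generated by x ~ alpha x and x ~ gamma_e x *)
Definition orbAG (q : nat) (e : bool) : relation k :=
  clos_refl_sym_trans k (fun a b => b = a^-1 \/ b = gam q e a).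

Definition orbG (q : nat) (e : bool) : relation k :=
  clos_refl_sym_trans k (fun a b => b = gam q e a).

(* the <alpha,gamma_e>-orbit of x is a single gamma_e-orbit (i.e. lies in Omega') *)
Definition single_orbit (q : nat) (e : bool) (x : k) : Prop :=
  forall y, orbAG q e x y <-> orbG q e x y.

Definition nmult (D : {poly k}) (x : k) : nat := mup x D.

Definition frakA (n : nat) (D : {poly k}) : Prop :=
  [/\ D \is monic, D.[0] != 0, size D = n.+1,
      (forall x : k, x != 0 -> nmult D x^-1 = nmult D x) &
      (~~ odd (nmult D 1) /\ ~~ odd (nmult D (-1)))].

(* R is a system of representatives of the orbits O in Omega'_{alpha,gamma_e}
   with n_O <> 0 (possibly also containing representatives of orbits in Omega'
   with n_O = 0), one per orbit. *)
Definition jrep (q : nat) (e : bool) (D : {poly k}) (R : seq k) : Prop :=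
  [/\ (forall x, x \in R -> ktri x /\ single_orbit q e x),
      (forall i j, (i < size R)%N -> (j < size R)%N ->
          orbAG q e (nth 0 R i) (nth 0 R j) -> i = j) &
      (forall x, ktri x -> single_orbit q e x -> (0 < nmult D x)%N ->
          exists2 y, y \in R & orbAG q e x y)].

Definition jval (D : {poly k}) (R : seq k) : bool :=
  odd (\sum_(x <- R) nmult D x).

End Defs.

(* Main.v *)
Require Import Defs.
From HB Require Import structures.
From mathcomp Require Import all_boot all_order all_algebra zify.
From Stdlib Require Import Relations Classical ClassicalEpsilon.
Import GRing.Theory.
Local Open Scope ring_scope.

Lemma pair_even (T : eqType) (f : T -> T) (w : T -> nat) (A : seq T) :
  uniq A -> (forall x, x \in A -> [/\ f x \in A, f x != x, f (f x) = x & w (f x) = w x]) ->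
  ~~ odd (\sum_(x <- A) w x).
Proof.
move: {2}(size A) (leqnn (size A)) => N; elim: N A => [|N IH] [|x A] //= hs hu hA;
  try by rewrite big_nil.
case/andP: hu => xA uA.
have [fA fx ffx wfx] := hA x (mem_head _ _).
have fA' : f x \in A by move: fA; rewrite inE (negbTE fx).
rewrite big_cons (big_rem _ fA') /= wfx addnA oddD oddD addbb /=.
apply: IH; first by rewrite size_rem //; move: hs; case: (size A) => //= n; lia.
  exact: rem_uniq.
move=> z; rewrite (mem_rem_uniq _ uA) inE => /andP [zfx zA].
have [fzA fzz ffz wfz] : [/\ f z \in x :: A, f z != z, f (f z) = z & w (f z) = w z] by apply: hA; rewrite inE zA orbT.
have zx : z != x by apply: contraNneq xA => <-.
split=> //.
rewrite (mem_rem_uniq _ uA) inE; apply/andP; split.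
  by apply: contra zx => /eqP /(congr1 f); rewrite ffz ffx => ->.
move: fzA; rewrite inE => /orP [/eqP fzx|//].
by move: zfx; rewrite -fzx ffz eqxx.
Qed.

Lemma perm_sub (T : eqType) (A s : seq T) :
  (forall x, (count_mem x A <= count_mem x s)%N) -> exists s', perm_eq s (A ++ s').
Proof.
elim: A s => [|a A IH] s h; first by exists s.
have as_ : a \in s by rewrite -has_pred1 has_count; move: (h a) => /=; rewrite eqxx; lia.
have hp := perm_to_rem as_.
have [s' hs'] : exists s', perm_eq (rem a s) (A ++ s').
  apply: IH => x; move: (h x) => /=; rewrite (permP hp) /=; clear -s; lia.
by exists s'; rewrite (perm_trans hp) //= perm_cons.
Qed.

Lemma count_or4 (T : eqType) (a b c d : T) (s : seq T) :
  a != b -> a != c -> a != d -> b != c -> b != d -> c != d ->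
  count (fun y => [|| y == a, y == b, y == c | y == d]) s =
  (count_mem a s + count_mem b s + count_mem c s + count_mem d s)%N.
Proof.
move=> ab ac ad bc bd cd.
have ba : b != a by rewrite eq_sym. have ca : c != a by rewrite eq_sym.
have da : d != a by rewrite eq_sym. have cb : c != b by rewrite eq_sym.
have db : d != b by rewrite eq_sym. have dc : d != c by rewrite eq_sym.
elim: s => //= y s ->.
have [->|ya] := eqVneq y a; first by rewrite ?eqxx ?(negbTE ab) ?(negbTE ac) ?(negbTE ad) ?(negbTE bc) ?(negbTE bd) ?(negbTE cd) ?(negbTE ba) ?(negbTE ca) ?(negbTE da) ?(negbTE cb) ?(negbTE db) ?(negbTE dc) /=; clear -s; lia.
have [->|yb] := eqVneq y b; first by rewrite ?eqxx ?(negbTE ab) ?(negbTE ac) ?(negbTE ad) ?(negbTE bc) ?(negbTE bd) ?(negbTE cd) ?(negbTE ba) ?(negbTE ca) ?(negbTE da) ?(negbTE cb) ?(negbTE db) ?(negbTE dc) /=; clear -s; lia.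
have [->|yc] := eqVneq y c; first by rewrite ?eqxx ?(negbTE ab) ?(negbTE ac) ?(negbTE ad) ?(negbTE bc) ?(negbTE bd) ?(negbTE cd) ?(negbTE ba) ?(negbTE ca) ?(negbTE da) ?(negbTE cb) ?(negbTE db) ?(negbTE dc) /=; clear -s; lia.
by case: (y == d) => /=; clear -s; lia.
Qed.

Lemma count_filter_mem (T : eqType) (P : pred T) (s : seq T) (x : T) :
  count_mem x (filter P s) = if P x then count_mem x s else 0%N.
Proof.
rewrite count_filter; case hx: (P x).
  by apply: eq_count => y /=; case: eqP => // ->; rewrite hx.
rewrite (@eq_count _ _ pred0) ?count_pred0 // => y /=.
by case: eqP => // ->; rewrite hx andbF.
Qed.

Lemma crst_inv (T : Type) (X : Type) (S : relation T) (I : T -> X) a b :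
  (forall a b, S a b -> I a = I b) -> clos_refl_sym_trans T S a b -> I a = I b.
Proof.
move=> HS; elim.
- by move=> ? ? H; exact: HS H.
- by [].
- by move=> ? ? _ ->.
- by move=> ? ? ? _ -> _ ->.
Qed.

Lemma crst_map (T : Type) (S : relation T) (h : T -> T) a b :
  (forall a b, S a b -> S (h a) (h b)) -> clos_refl_sym_trans T S a b ->
  clos_refl_sym_trans T S (h a) (h b).
Proof.
move=> HS; elim.
- by move=> ? ? H; apply: rst_step; exact: HS H.
- by move=> ?; apply: rst_refl.
- by move=> ? ? _; apply: rst_sym.
- by move=> ? ? ? _ H1 _ H2; apply: rst_trans H1 H2.
Qed.

Lemma crst_sub (T : Type) (S S' : relation T) a b :
  (forall a b, S a b -> S' a b) -> clos_refl_sym_trans T S a b ->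
  clos_refl_sym_trans T S' a b.
Proof.
move=> HS; elim.
- by move=> ? ? H; apply: rst_step; exact: HS H.
- by move=> ?; apply: rst_refl.
- by move=> ? ? _; apply: rst_sym.
- by move=> ? ? ? _ H1 _ H2; apply: rst_trans H1 H2.
Qed.

Section Orb.
Variable k : closedFieldType.
Variables (q : nat) (e : bool).
Hypothesis hqodd : odd q.
Hypothesis h2 : (2%:R : k) != 0.
Hypothesis halg : forall x : k, exists2 r : nat, (0 < r)%N & x ^+ (q ^ r) = x.

Local Notation g := (@gam k q e).

Lemma sgnq : (-1 : k) ^+ q = -1 :> k.
Proof. by rewrite -signr_odd hqodd expr1. Qed.

Lemma gamN x : g (- x) = - g x.
Proof. by rewrite /gam (exprNn x) sgnq mulrCA mulN1r. Qed.

Lemma sgnV (b : bool) : ((-1 : k) ^+ b)^-1 = (-1) ^+ b.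
Proof. by case: b; rewrite ?invrN1 ?invr1. Qed.

Lemma gamV x : g (x^-1) = (g x)^-1.
Proof. by rewrite /gam invfM sgnV exprVn. Qed.

Lemma gam_eq0 x : (g x == 0) = (x == 0).
Proof.
rewrite /gam mulf_eq0 signr_eq0 /= expf_eq0.
by case: q hqodd => // n _; rewrite ltn0Sn.
Qed.

Lemma iter_gam r x : iter r g x = (-1) ^+ (e * r) * x ^+ (q ^ r).
Proof.
elim: r => [|r IH]; first by rewrite muln0 expr0 mul1r expn0 expr1.
rewrite iterS IH /gam exprMn -exprM -exprM -expnSr mulrA -exprD.
congr (_ * _); rewrite -[LHS]signr_odd -[RHS]signr_odd; congr (_ ^+ _).
by rewrite oddD !oddM hqodd andbT /=; case: e => //=; rewrite addbT.
Qed.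

Lemma gam_period x : exists2 N, (0 < N)%N & iter N g x = x.
Proof.
have [r r0 hr] := halg x; exists (r + r)%N; first by lia.
rewrite iter_gam expnD (exprM x) hr hr.
by rewrite -signr_odd oddM oddD addbb andbF expr0 mul1r.
Qed.

Lemma orbG_iter {x y : k} : orbG q e x y -> exists a, y = iter a g x.
Proof.
elim.
- by move=> a b ->; exists 1%N.
- by move=> a; exists 0%N.
- move=> a b _ [c ->]; have [N N0 hN] := gam_period a.
  exists (N.-1 * c)%N; rewrite -iterD.
  suff -> : (N.-1 * c + c = N * c)%N.
    by elim: c => [|c IH]; rewrite ?muln0 // mulnS iterD -IH hN.
  by case: N N0 hN => // N _ _; rewrite mulSn addnC.
- by move=> a b c _ [u ->] _ [v ->]; exists (v + u)%N; rewrite iterD.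
Qed.

Lemma iter_gamN r x : iter r g (- x) = - iter r g x.
Proof. by elim: r => //= r ->; rewrite gamN. Qed.

Lemma iter_gamV r x : iter r g (x^-1) = (iter r g x)^-1.
Proof. by elim: r => //= r ->; rewrite gamV. Qed.

Lemma orbAG_N {a b : k} : orbAG q e a b -> orbAG q e (- a) (- b).
Proof.
apply: crst_map => u v [->|->]; [left; by rewrite invrN | right; by rewrite gamN].
Qed.

Lemma orbG_N {a b : k} : orbG q e a b -> orbG q e (- a) (- b).
Proof. by apply: crst_map => u v ->; rewrite gamN. Qed.

Lemma orbG_AG {a b : k} : orbG q e a b -> orbAG q e a b.
Proof. by apply: crst_sub => u v ->; right. Qed.

Lemma sq_frob (a : k) : (a ^+ 2) ^+ q = -1 -> a ^+ 2 = -1.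
Proof.
move=> h; have [r r0 hr] := halg (a ^+ 2).
rewrite -hr; case: r r0 hr => // r _ _.
by rewrite expnS exprM h -signr_odd oddX hqodd orbT expr1.
Qed.

Lemma orbAG_sq {a b : k} : orbAG q e a b -> (a ^+ 2 == -1) = (b ^+ 2 == -1).
Proof.
apply: (@crst_inv _ _ _ (fun c : k => c ^+ 2 == -1)) => u v [->|->].
  by rewrite exprVn -invrN1 (inj_eq (can_inj (@invrK _))) invrN1.
rewrite /gam exprMn sqrr_sign mul1r -exprM mulnC exprM.
apply/eqP/eqP => [->|/sq_frob] //; exact: sgnq.
Qed.



Lemma neq_opp {x : k} : x != 0 -> - x != x.
Proof.
move=> x0; apply/eqP => h.
have : x *+ 2 == 0 by rewrite mulr2n -{1}h addNr.
by rewrite -mulr_natr mulf_eq0 (negbTE x0) (negbTE h2).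
Qed.

Lemma key (x : k) : ktri x -> orbG q e x (- x) -> orbG q e x (x^-1) ->
  x ^+ 2 = -1.
Proof.
move=> [x0 x1 xN1] /orbG_iter [a ha] /orbG_iter [b hb].
pose P N := (0 < N)%N && (iter N g x == x).
have exP : exists N, P N.
  by have [N N0 hN] := gam_period x; exists N; rewrite /P N0 hN eqxx.
case: (ex_minnP exP) => d /andP [d0 /eqP hd] dmin.
have itm : forall c, iter (c * d) g x = x.
  by elim=> [|c IH] //; rewrite mulSn iterD IH hd.
have itmod : forall j, iter j g x = iter (j %% d)%N g x.
  by move=> j; rewrite {1}(divn_eq j d) addnC iterD itm.
have pdvd : forall j, iter j g x = x -> (j %% d = 0)%N.
  move=> j hj; case: (posnP (j %% d)%N) => // hp.
  have := dmin (j %% d)%N; rewrite /P hp -itmod hj eqxx => /(_ isT).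
  by rewrite leqNgt ltn_mod d0.
have half : forall c y, y != x -> iter c g x = y -> iter (c + c) g x = x ->
    (2 * (c %% d) = d)%N.
  move=> c y yx hc hcc; have c0 : (c %% d != 0)%N.
    apply/eqP => h; move: yx; rewrite -hc itmod h /= eqxx //.
  have h2c : ((2 * (c %% d)) %% d = 0)%N.
    by rewrite modnMmr mul2n -addnn; apply: pdvd.
  have lt : (c %% d < d)%N by rewrite ltn_mod.
  move/eqP: h2c; rewrite -/(dvdn d _) => /dvdnP [m hm].
  case: m hm => [|[|m]] hm; lia.
have ha2 : (2 * (a %% d) = d)%N.
  apply: (half a (- x)); [exact: neq_opp | by [] |].
  by rewrite iterD -ha iter_gamN -ha opprK.
have hb2 : (2 * (b %% d) = d)%N.
  apply: (half b (x^-1)); [ | by [] |].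
    apply/eqP => h; have : x * x = 1 by rewrite -{1}h mulVf.
    by move/eqP; rewrite -expr2 sqrf_eq1 (negbTE x1) (negbTE xN1).
  by rewrite iterD -hb iter_gamV -hb invrK.
have : - x = x^-1 by rewrite ha hb (itmod a) (itmod b); congr (iter _ _ _); lia.
move=> h; have : x * (- x) = 1 by rewrite h mulfV.
by rewrite mulrN -expr2 => /eqP; rewrite eqr_oppLR => /eqP.
Qed.


Lemma sq_inv {x : k} : x ^+ 2 = -1 -> x^-1 = - x.
Proof.
move=> hx; have x0 : x != 0 by apply/eqP => x0; move: hx; rewrite x0 expr0n /= => /eqP; rewrite eq_sym oppr_eq0 oner_eq0.
apply: (mulfI x0); rewrite mulfV // mulrN -expr2 hx opprK //.
Qed.

Lemma sq_neq0 {x : k} : x ^+ 2 = -1 -> x != 0.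
Proof. by move=> hx; apply/eqP => x0; move: hx; rewrite x0 expr0n /= => /eqP; rewrite eq_sym oppr_eq0 oner_eq0. Qed.

Lemma gam_sq {x : k} : x ^+ 2 = -1 -> g x = (-1) ^+ (e + q./2) * x.
Proof.
move=> hx.
have xq : x ^+ q = (-1) ^+ (q./2) * x.
  by rewrite -{1}(odd_double_half q) hqodd /= -mul2n exprS exprM hx mulrC.
by rewrite /gam xq mulrA -exprD.
Qed.

Lemma one_neqN1 : (1 : k) != -1.
Proof.
apply/eqP => h; move: h2; rewrite -[2%:R]/(1 + 1) {2}h subrr eqxx //.
Qed.

Lemma single_sq {x : k} : x ^+ 2 = -1 -> single_orbit q e x <-> odd (e + q./2).
Proof.
move=> hx; have x0 := @sq_neq0 x hx; split.
  move=> hs; have : orbAG q e x (- x) by apply: rst_step; left; rewrite sq_inv.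
  move/hs/orbG_iter => [a ha]; apply/negPn/negP => hodd.
  have gx : g x = x by rewrite gam_sq // -signr_odd (negbTE hodd) expr0 mul1r.
  have : iter a g x = x by elim: a {ha} => //= a ->.
  by rewrite -ha => /eqP; rewrite (negbTE (@neq_opp x x0)).
move=> hodd y; split; last exact: orbG_AG.
move=> /orbAG_sq; rewrite hx eqxx -hx eqf_sqr => /esym.
case/orP => /eqP ->; first exact: rst_refl.
by apply: rst_step; rewrite gam_sq // -signr_odd hodd expr1 mulN1r.
Qed.


Lemma eq_inv_c (l c : k) : l != 0 -> (l == c * l^-1) = (l ^+ 2 == c).
Proof.
move=> l0; apply/eqP/eqP => h.
  by rewrite expr2 {1}h -mulrA mulVf // mulr1.
by rewrite -h expr2 mulfK.
Qed.

Lemma invr_eqC (x y : k) : (x^-1 == y) = (x == y^-1).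
Proof. by rewrite -(inj_eq (can_inj (@invrK _))) invrK. Qed.

Lemma four (s : seq k) :
  (forall x, x \in s -> [&& x != 0, x ^+ 2 != 1 & x ^+ 2 != -1]) ->
  (forall x, count_mem (x^-1) s = count_mem x s) ->
  (forall x, count_mem (- x) s = count_mem x s) ->
  (4 %| size s)%N.
Proof.
move: {2}(size s) (leqnn (size s)) => N; elim: N s => [|N IH] [|l s] // hs hP hV hN.
have /and3P [l0 l1 lN1] := hP l (mem_head _ _).
have lV0 : l^-1 != 0 by rewrite invr_eq0.
pose A := [:: l; - l; l^-1; - l^-1].
have uA : uniq A.
  rewrite /A /= !inE !negb_or -!andbA; apply/and4P; split.
  - by rewrite eq_sym neq_opp.
  - by rewrite -[l^-1]mul1r eq_inv_c.
  - by rewrite -mulN1r eq_inv_c.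
  - rewrite andbT; apply/and3P; split.
    + by rewrite eqr_oppLR -mulN1r eq_inv_c // sqrrN.
    + by rewrite (inj_eq (can_inj (@opprK _))) -[l^-1]mul1r eq_inv_c.
    + by rewrite eq_sym neq_opp.
have memV : forall x, (x^-1 \in A) = (x \in A).
  move=> x; rewrite !inE !invr_eqC !invrN !invrK.
  by case: (x == l); case: (x == - l); case: (x == l^-1); case: (x == - l^-1).
have memN : forall x, (- x \in A) = (x \in A).
  move=> x; rewrite !inE !eqr_oppLR !opprK.
  by case: (x == l); case: (x == - l); case: (x == l^-1); case: (x == - l^-1).
have cA : forall x, count_mem x A = (x \in A) by move=> x; apply: count_uniq_mem.
have cl : (0 < count_mem l (l :: s))%N by rewrite /= eqxx.
have sub : forall x, (count_mem x A <= count_mem x (l :: s))%N.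
  move=> x; rewrite cA; case xA: (x \in A) => //.
  move: xA; rewrite !inE => /or4P [] /eqP ->.
  - exact: cl.
  - by rewrite hN.
  - by rewrite hV.
  - by rewrite hN hV.
have [s' hs'] := @perm_sub _ A (l :: s) sub.
have cs : forall x, count_mem x (l :: s) = (count_mem x A + count_mem x s')%N.
  by move=> x; rewrite (permP hs') count_cat.
have sz : size (l :: s) = (4 + size s')%N by rewrite (perm_size hs') size_cat.
rewrite sz dvdn_addl //; apply: IH.
- by move: hs; rewrite sz addSn ltnS => /(leq_trans (leq_addl 3 _)).
- move=> x xs; apply: hP; rewrite (perm_mem hs') mem_cat xs orbT //.
- move=> x; have c1 := cs x; have c2 := cs x^-1.
  rewrite hV c1 !cA memV in c2; move/eqP: c2; rewrite eqn_add2l => /eqP ->.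
  by [].
- move=> x; have c1 := cs x; have c2 := cs (- x).
  rewrite hN c1 !cA memN in c2; move/eqP: c2; rewrite eqn_add2l => /eqP ->.
  by [].
Qed.


Lemma size_mod {s : seq k} {i : k} : i ^+ 2 = -1 ->
  (forall x, x \in s -> x != 0) ->
  (forall x, count_mem (x^-1) s = count_mem x s) ->
  (forall x, count_mem (- x) s = count_mem x s) ->
  ~~ odd (count_mem 1 s) ->
  exists c, size s = (2 * count_mem i s + 4 * c)%N.
Proof.
move=> hi hs0 hV hN h1.
pose P := fun x : k => (x ^+ 2 != 1) && (x ^+ 2 != -1).
have PV : forall x, P x^-1 = P x.
  by move=> x; rewrite /P exprVn invr_eq1 invr_eqC invrN1.
have PN : forall x, P (- x) = P x by move=> x; rewrite /P sqrrN.
have i0 := sq_neq0 hi.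
have /dvdnP [c hc] : (4 %| size (filter P s))%N.
  apply: four.
  - move=> x; rewrite mem_filter => /andP [px xs].
    by rewrite hs0 //; move: px; rewrite /P => /andP [-> ->].
  - by move=> x; rewrite !count_filter_mem PV hV.
  - by move=> x; rewrite !count_filter_mem PN hN.
have hC : count (predC P) s = count (fun y => [|| y == 1, y == -1, y == i | y == - i]) s.
  apply: eq_in_count => y ys /=; rewrite /P negb_and !negbK sqrf_eq1 -hi eqf_sqr.
  by rewrite -!orbA.
have i1 : (1 : k) != i.
  by apply/eqP => h; move: hi; rewrite -h expr1n => /eqP; rewrite -subr_eq0 opprK -[1 + 1]/(2%:R) (negbTE h2).
have iN1 : (1 : k) != - i.
  by apply/eqP => h; move: hi; rewrite -sqrrN -h expr1n => /eqP; rewrite -subr_eq0 opprK -[1 + 1]/(2%:R) (negbTE h2).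
rewrite count_or4 in hC; last first.
- by rewrite eq_sym neq_opp.
- by rewrite (inj_eq (can_inj (@opprK _))).
- by rewrite eqr_oppLR.
- exact: iN1.
- exact: i1.
- exact: one_neqN1.
have e1 : count_mem (1%R : k) s = (2 * (count_mem (1%R : k) s)./2)%N.
  by rewrite mul2n -[LHS]odd_double_half (negbTE h1).
have := count_predC P s; rewrite hC -size_filter hc hN hN => hsz.
exists (c + (count_mem (1%R : k) s)./2)%N; rewrite -hsz {1 2}e1.
move: (count_mem (1%R : k) s)./2 (count_mem i s) => a b; clear; lia.
Qed.

Lemma orbAG_f (f : k -> nat)
  (finv : forall x, x != 0 -> f x^-1 = f x)
  (fneg : forall x, x != 0 -> f (- x) = f x)
  (ffrob : forall x, x != 0 -> f (x ^+ q) = f x) (a b : k) :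
  orbAG q e a b -> a != 0 -> f b = f a.
Proof.
move=> hab a0.
have := @crst_inv _ _ _ (fun c : k => if c == 0 then None else Some (f c)) a b _ hab.
move=> /(_ _) H.
have {}H : (if a == 0 then None else Some (f a)) = (if b == 0 then None else Some (f b)).
  apply: H => u v [->|->].
    rewrite invr_eq0; case: eqP => // /eqP u0; by rewrite finv.
  rewrite gam_eq0; case: eqP => // /eqP u0; rewrite /gam.
  have uq0 : u ^+ q != 0 by rewrite expf_neq0.
  by case: e => /=; rewrite ?expr1 ?mulN1r ?expr0 ?mul1r ?fneg ?ffrob.
move: H; rewrite (negbTE a0); case: eqP => // _ [] ->; by [].
Qed.

Lemma jrep_rel {D : {poly k}} {R : seq k} {x y : k} : jrep q e D R ->
  x \in R -> y \in R -> orbAG q e x y -> x = y.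
Proof.
move=> [_ h2R _] xR yR hxy.
have := h2R (index x R) (index y R); rewrite !index_mem !nth_index // => /(_ xR yR hxy) hi.
by rewrite -(nth_index 0 xR) -(nth_index 0 yR) hi.
Qed.

Lemma jrep_uniq {D : {poly k}} {R : seq k} : jrep q e D R -> uniq R.
Proof.
move=> [_ h2R _]; apply/(uniqP 0) => i j; rewrite !inE => hi hj hij.
by apply: h2R => //; rewrite hij; apply: rst_refl.
Qed.

Lemma single_N (x : k) : single_orbit q e x -> single_orbit q e (- x).
Proof.
move=> hs y; split; last exact: orbG_AG.
move=> /orbAG_N; rewrite opprK => /hs /orbG_N; by rewrite opprK.
Qed.

Lemma ktri_N (x : k) : ktri x -> ktri (- x).
Proof.
move=> [x0 x1 xN1]; split; first by rewrite oppr_eq0.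
  by rewrite eqr_oppLR.
by rewrite (inj_eq (can_inj (@opprK _))).
Qed.

Definition pb (P : Prop) : bool := if excluded_middle_informative P then true else false.
Lemma pbP (P : Prop) : pb P <-> P.
Proof. by rewrite /pb; case: excluded_middle_informative. Qed.

Lemma j_rest (D : {poly k}) (R : seq k)
  (hinv : forall x : k, x != 0 -> nmult D x^-1 = nmult D x)
  (hneg : forall x : k, x != 0 -> nmult D (- x) = nmult D x)
  (hfrob : forall x : k, x != 0 -> nmult D (x ^+ q) = nmult D x) :
  jrep q e D R -> ~~ odd (\sum_(x <- R | x ^+ 2 != -1) nmult D x).
Proof.
move=> hR; have uR := jrep_uniq hR.
have [h1R _ h3R] := hR.
rewrite (bigID (fun x => 0 < nmult D x)%N) /=.
rewrite [X in (_ + X)%N]big1; last by move=> x /andP [_]; rewrite lt0n negbK => /eqP.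
rewrite addn0 -big_filter.
pose A := [seq x <- R | (x ^+ 2 != -1) && (0 < nmult D x)%N].
pose F := fun x : k => nth 0 R (find (fun y => pb (orbAG q e (- x) y)) R).
have FR : forall x, x \in A -> F x \in R /\ orbAG q e (- x) (F x).
  move=> x; rewrite mem_filter => /andP [/andP [xsq xpos] xR].
  have [kx sx] := h1R x xR.
  have [y yR hy] : exists2 y, y \in R & orbAG q e (- x) y.
    apply: h3R; [exact: ktri_N | exact: single_N | by rewrite hneg //; case: kx].
  have hh : has (fun y => pb (orbAG q e (- x) y)) R.
    by apply/hasP; exists y => //; apply/pbP.
  split; first by rewrite /F mem_nth // -has_find.
  by apply/pbP; apply: (nth_find 0 hh).
apply: (@pair_even _ F); first by rewrite filter_uniq.
move=> x xA; have [FxR hFx] := FR x xA.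
move: (xA); rewrite mem_filter => /andP [/andP [xsq xpos] xR].
have [kx sx] := h1R x xR.
have x0 : x != 0 by case: kx.
have fF : nmult D (F x) = nmult D x.
  have nx0 : - x != 0 by rewrite oppr_eq0.
  by rewrite (@orbAG_f (nmult D) hinv hneg hfrob (- x) (F x) hFx nx0) (hneg x x0).
have FA : F x \in A.
  rewrite mem_filter FxR andbT fF xpos andbT.
  by rewrite -(orbAG_sq hFx) sqrrN.
split.
- exact: FA.
- apply/eqP => hF; apply/negP: xsq; rewrite negbK; apply/eqP.
  apply: key.
  + exact: kx.
  + by apply/sx; apply: rst_sym; rewrite -{2}hF.
  + by apply/sx; apply: rst_step; left.
- have [FFR hFF] := FR _ FA.
  apply/esym; apply: (jrep_rel hR xR FFR).
  apply: rst_trans hFF; move/orbAG_N: hFx; rewrite opprK; exact.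
- exact: fF.
Qed.

Lemma sq_ktri {i : k} : i ^+ 2 = -1 -> ktri i.
Proof.
move=> hi; split; first exact: sq_neq0.
  by apply/eqP => h; move: hi; rewrite h expr1n => /eqP; rewrite (negbTE one_neqN1).
by apply/eqP => h; move: hi; rewrite h sqrrN expr1n => /eqP; rewrite (negbTE one_neqN1).
Qed.

Lemma j_sq (D : {poly k}) (R : seq k)
  (hinv : forall x : k, x != 0 -> nmult D x^-1 = nmult D x)
  (hneg : forall x : k, x != 0 -> nmult D (- x) = nmult D x)
  (hfrob : forall x : k, x != 0 -> nmult D (x ^+ q) = nmult D x)
  (i : k) (hi : i ^+ 2 = -1) :
  jrep q e D R ->
  odd (\sum_(x <- R | x ^+ 2 == -1) nmult D x) = odd (e + q./2) && odd (nmult D i).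
Proof.
move=> hR; have uR := jrep_uniq hR.
have [h1R _ h3R] := hR.
have i0 : i != 0 := sq_neq0 hi.
have fsq : forall x, x ^+ 2 == -1 -> nmult D x = nmult D i.
  move=> x; rewrite -hi eqf_sqr => /orP [] /eqP ->; first by [].
  exact: hneg.
case: (posnP (nmult D i)) => [fi0|fipos].
  rewrite big1; first by rewrite fi0 andbF.
  by move=> x /fsq ->.
case C: (odd (e + q./2)).
- have si : single_orbit q e i by apply/single_sq.
  have [y yR hy] := h3R i (sq_ktri hi) si fipos.
  have ysq : y ^+ 2 == -1 by rewrite -(orbAG_sq hy) hi.
  rewrite (big_rem _ yR) ysq (fsq y ysq).
  suff -> : \sum_(x <- rem y R | x ^+ 2 == -1) nmult D x = 0%N by rewrite /= addn0.
  apply: big1_seq => x /andP [xsq]; rewrite (mem_rem_uniq _ uR) inE => /andP [xy xR].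
  exfalso; move/negP: xy; apply; apply/eqP; apply: (jrep_rel hR xR yR).
  move/eqP: ysq; rewrite -(eqP xsq) => /eqP; rewrite eqf_sqr => /orP [] /eqP ->.
    exact: rst_refl.
  by apply: rst_step; left; rewrite sq_inv //; apply/eqP.
- rewrite big1_seq //= => x /andP [xsq xR].
  have [_ sx] := h1R x xR.
  by move: C; have := (single_sq (eqP xsq)).1 sx => ->.
Qed.

Lemma exists_rep (D : {poly k}) (s : seq k) :
  (forall x, (0 < nmult D x)%N -> x \in s) -> exists R, jrep q e D R.
Proof.
move=> hs.
suff [R [h1 h2' h3]] : exists R : seq k, [/\ (forall x, x \in R -> ktri x /\ single_orbit q e x),
      (forall i j, (i < size R)%N -> (j < size R)%N ->
          orbAG q e (nth 0 R i) (nth 0 R j) -> i = j) &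
      (forall x, x \in s -> ktri x -> single_orbit q e x ->
          exists2 y, y \in R & orbAG q e x y)].
  by exists R; split => // x kx sx /hs xs; apply: h3.
elim: s {hs} => [|x l [R [h1 h2' h3]]].
  by exists [::]; split.
case: (classic (ktri x /\ single_orbit q e x /\ ~ (exists2 y, y \in R & orbAG q e x y))).
- move=> [kx [sx nx]]; exists (x :: R); split.
  + move=> z; rewrite inE => /orP [/eqP ->|/h1] //.
  + move=> [|i] [|j] //= hi hj hr.
    * by exfalso; apply: nx; exists (nth 0 R j) => //; apply: mem_nth.
    * by exfalso; apply: nx; exists (nth 0 R i); [apply: mem_nth | apply: rst_sym].
    * by congr S; apply: h2'.
  + move=> z; rewrite inE => /orP [/eqP ->|zl] kz sz.
      by exists x; [exact: mem_head | exact: rst_refl].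
    by have [y yR hy] := h3 z zl kz sz; exists y => //; rewrite inE yR orbT.
- move=> hn; exists R; split => //.
  move=> z; rewrite inE => /orP [/eqP ->|zl] kz sz; last exact: h3.
  apply: NNPP => hno; apply: hn; split => //; split => //.
Qed.

Lemma main_sec (n : nat) (hn : ~~ odd n) (D : {poly k})
  (hD : frakA n D)
  (hneg : forall x : k, x != 0 -> nmult D (- x) = nmult D x)
  (hfrob : forall x : k, x != 0 -> nmult D (x ^+ q) = nmult D x) :
  (exists R : seq k, jrep q e D R) /\
  (forall R : seq k, jrep q e D R ->
     jval D R = odd ((n * (if e then q.+1 else q.-1)) %/ 4)).
Proof.
have [hmon hD0 hsz hinv [h1 _]] := hD.
have [s hs] := closed_field_poly_normal D.
rewrite (monicP hmon) scale1r in hs.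
have cnt : forall x, nmult D x = count_mem x s.
  by move=> x; rewrite /nmult hs mu_prod_XsubC.
have szs : size s = n.
  by move: hsz; rewrite hs size_prod_XsubC => -[].
split.
  apply: (@exists_rep D s) => x; rewrite cnt -has_pred1 has_count //.
move=> R hR.
have [i hi] := imaginary_exists k.
have s0 : forall x, x \in s -> x != 0.
  move=> x xs; apply/eqP => x0; move/negP: hD0; apply.
  by have := root_prod_XsubC s x; rewrite xs -hs /root x0.
have hV : forall x, count_mem (x^-1) s = count_mem x s.
  move=> x; case: (eqVneq x 0) => [->|x0]; first by rewrite invr0.
  by rewrite -!cnt hinv.
have hN : forall x, count_mem (- x) s = count_mem x s.
  move=> x; case: (eqVneq x 0) => [->|x0]; first by rewrite oppr0.
  by rewrite -!cnt hneg.
have h1s : ~~ odd (count_mem 1 s) by rewrite -cnt.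
have [c hc] := size_mod hi s0 hV hN h1s.
rewrite -cnt szs in hc.
rewrite /jval (bigID (fun x => x ^+ 2 == -1)) /= oddD (@j_sq D R hinv hneg hfrob i hi hR).
rewrite (negbTE (@j_rest D R hinv hneg hfrob hR)) addbF hc.
set t := q./2; set a := nmult D i.
have hq : q = (2 * t).+1 by rewrite /t mul2n -[LHS]odd_double_half hqodd.
rewrite hq; case: e => /=.
- have -> : ((2 * a + 4 * c) * (2 * t).+2 = 4 * ((a + 2 * c) * t.+1))%N by lia.
  rewrite mulKn // ?add0n oddM oddD oddM /=; by case: (odd a); case: (odd t); case: (odd c).
- have -> : ((2 * a + 4 * c) * (2 * t) = 4 * (a * t + 2 * c * t))%N by lia.
  rewrite mulKn // ?add0n oddD !oddM /=; by case: (odd a); case: (odd t); case: (odd c).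
Qed.

End Orb.

Theorem mainTheorem7
  (k : closedFieldType) (p m q : nat)
  (hp : prime p) (hchar : p \in [pchar k]) (hm : (0 < m)%N) (hq : q = (p ^ m)%N)
  (hqodd : odd q)
  (halg : forall x : k, exists2 r : nat, (0 < r)%N & x ^+ (q ^ r) = x)
  (e : bool) (n : nat) (hn : ~~ odd n) (D : {poly k})
  (hD : frakA n D)
  (hneg : forall x : k, x != 0 -> nmult D (- x) = nmult D x)
  (hfrob : forall x : k, x != 0 -> nmult D (x ^+ q) = nmult D x) :
  (exists R : seq k, jrep q e D R) /\
  (forall R : seq k, jrep q e D R ->
     jval D R = odd ((n * (if e then q.+1 else q.-1)) %/ 4)).
Proof.
have h2 : (2%:R : k) != 0.
  apply/eqP => h.
  have h2c : (2 \in [pchar k])%N by rewrite inE /= h eqxx.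
  move: h2c; rewrite (pcharf_eq hchar) inE => /eqP p2.
  move: hqodd; rewrite hq -p2; clear hq; case: m hm => // m0 _; by rewrite expnS oddM.
exact: (@main_sec k q e hqodd h2 halg n hn D hD hneg hfrob).
Qed.
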